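(* Let $\hbar$ and $\tilde t_1,\tilde t_2,\dots$ be formal parameters, $D=x\frac{\partial}{\partial x}$, and let $$\Psi^{mm}(x,\hbar):=\sum_{j\ge0}s_{(j)}(\tilde{\mathbf t}/\hbar)\,x^j\prod_{l=1}^j\frac{1}{1-\hbar(l-1)}$$ (the first basis vector $\Phi^{mm}_1$ with $\beta=\hbar$ and $\tilde t_k\mapsto\tilde t_k/\hbar$). Then $A_{mm}\Psi^{mm}=0$, where $$A_{mm}:=\sum_{k\ge1}k\tilde t_k\,x^k\prod_{j=0}^{k-1}\frac{1}{1-\hbar(D+j)}-\hbar D$$ (the product of operators in $D$ acts first, then multiplication by $x^k$). If moreover $\tilde t_k=0$ for all $k>l$, then $\tilde A_{mm}\Psi^{mm}=0$ for the polynomial operator $$\tilde A_{mm}=\sum_{k=1}^lk\tilde t_k\hat x^k\prod_{j=1}^{l-k}(1+\hat x\hat y+\hbar j)+\hat x\hat y\prod_{j=1}^l(1+\hat x\hat y+\hbar j),\qquad \hat x=x\cdot,\ \hat y=-\hbar\frac{\partial}{\partial x}.$$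
   Context: $s_{(j)}$ is defined by $\exp(\sum_{m\ge1}t_mx^m)=\sum_{j\ge0}s_{(j)}(\mathbf t)x^j$, and $\tilde{\mathbf t}/\hbar=(\tilde t_1/\hbar,\tilde t_2/\hbar,\dots)$. All expressions are formal power series in $x$ with coefficients formal in $\hbar$ and $\tilde{\mathbf t}$; operators $f(D)$ act on $x^m$ by multiplication by $f(m)$. *)

(* Defs.v *)
From HB Require Import structures.
From mathcomp Require Import all_boot all_order all_algebra.
Set Implicit Arguments. Unset Strict Implicit. Unset Printing Implicit Defensive.
Import Order.TTheory GRing.Theory Num.Theory.
Local Open Scope ring_scope.

(* Formal power series in x over a field R, represented by their
   coefficient sequence: F n = coefficient of x^n. *)
Definition series (R : Type) := nat -> R.

Section Defs.
Variable R : fieldType.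

(* s_(j)(t): coefficient of x^j in exp(sum_{m>=1} t_m x^m)
   = sum_{n>=0} (sum_{m>=1} t_m x^m)^n / n!.  Since the exponent has no
   constant term, only n <= j and m <= j contribute to x^j, so the
   truncations below are exact. *)
Definition schur_row (t : nat -> R) (j : nat) : R :=
  let T : {poly R} := \sum_(1 <= m < j.+1) t m *: 'X^m in
  \sum_(n < j.+1) (T ^+ n)`_j / (n`!)%:R.

(* f(D), D = x d/dx : acts on x^m by multiplication by f m *)
Definition fD (f : nat -> R) (F : series R) : series R := fun m => f m * F m.

Definition mulXn (k : nat) (F : series R) : series R :=
  fun n => if (k <= n)%N then F (n - k)%N else 0.

Definition Psi_mm (hbar : R) (t : nat -> R) : series R :=
  fun j => schur_row (fun m => t m / hbar) j *
           \prod_(1 <= l < j.+1) (1 - hbar * (l.-1)%:R)^-1.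

(* A_mm = sum_{k>=1} k t_k x^k prod_{j=0}^{k-1} 1/(1 - hbar (D+j)) - hbar D.
   On the coefficient of x^n only the terms k <= n contribute
   (x^k raises degree by k), so the sum is truncated exactly. *)
Definition A_mm (hbar : R) (t : nat -> R) (F : series R) : series R :=
  fun n =>
    \sum_(1 <= k < n.+1)
       (k%:R * t k) *
       mulXn k (fD (fun m => \prod_(0 <= j < k) (1 - hbar * (m + j)%:R)^-1) F) n
    - hbar * fD (fun m => m%:R) F n.

Definition xhat (F : series R) : series R := mulXn 1 F.
Definition yhat (hbar : R) (F : series R) : series R :=
  fun n => - hbar * ((n.+1)%:R * F n.+1).

Definition Bop (hbar : R) (j : nat) (F : series R) : series R :=
  fun n => F n + xhat (yhat hbar F) n + hbar * j%:R * F n.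

Definition opprod (ops : seq (series R -> series R)) (F : series R) : series R :=
  foldr (fun op G => op G) F ops.

Definition Atilde_mm (hbar : R) (t : nat -> R) (l : nat) (F : series R)
  : series R :=
  fun n =>
    \sum_(1 <= k < l.+1)
       (k%:R * t k) *
       iter k xhat (opprod [seq Bop hbar j | j <- iota 1 (l - k)] F) n
    + xhat (yhat hbar (opprod [seq Bop hbar j | j <- iota 1 l] F)) n.

End Defs.

(* Main.v *)
Require Import Defs.
From HB Require Import structures.
From mathcomp Require Import all_boot all_order all_algebra.
From mathcomp Require Import ring.
Import Order.TTheory GRing.Theory Num.Theory.
Local Open Scope ring_scope.

Section Aux.
Variable R : fieldType.
Hypothesis char0 : [pchar R] =i pred0.

Lemma natr_neq0 (n : nat) : (n > 0)%N -> n%:R != 0 :> R.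
Proof.
move=> n0; have /pcharf0P H : has_pchar0 R by [].
by rewrite H -lt0n.
Qed.

Definition Tp (u : nat -> R) (N : nat) : {poly R} := \sum_(1 <= m < N.+1) u m *: 'X^m.

Lemma coefTp u N i : (Tp u N)`_i = if (0 < i <= N)%N then u i else 0.
Proof.
rewrite /Tp; elim: N => [|N IH].
  by rewrite big_geq // coef0; case: i => [|[]].
rewrite big_nat_recr //= coefD IH coefZ coefXn; clear IH.
case: (ltngtP i N.+1) => [lt|gt|->].
- by rewrite ltnS in lt; rewrite mulr0 addr0 andbT lt andbT.
- have -> : (i <= N)%N = false by apply/negbTE; rewrite -ltnNge ltnW.
  by rewrite mulr0 addr0 !andbF.
- by rewrite ltnn mulr1 add0r andbT.
Qed.

Definition low n (p : {poly R}) := forall i, (i < n)%N -> p`_i = 0.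
Definition agree j (p q : {poly R}) := forall i, (i <= j)%N -> p`_i = q`_i.

Lemma low_mul a b p q : low a p -> low b q -> low (a + b) (p * q).
Proof.
move=> hp hq i lti; rewrite coefM big1 // => j _.
case: (ltnP j a) => ja; first by rewrite hp ?mul0r.
rewrite hq ?mulr0 //.
have := ltn_ord j; rewrite ltnS => ji.
rewrite ltn_subLR //; rewrite addnC in lti; apply: (leq_trans lti).
by rewrite addnC leq_add2r.
Qed.

Lemma low_exp p n : low 1 p -> low n (p ^+ n).
Proof.
move=> hp; elim: n => [|n IH]; first by move=> i.
by rewrite exprS -add1n; apply: low_mul.
Qed.

Lemma agree_mul j p q p' q' : agree j p q -> agree j p' q' -> agree j (p * p') (q * q').
Proof.
move=> h h' i ij; rewrite !coefM; apply: eq_bigr => k _.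
have := ltn_ord k; rewrite ltnS => ki.
rewrite h ?h' //; first by rewrite (leq_trans (leq_subr _ _)).
exact: leq_trans ki ij.
Qed.

Lemma agree_exp j p q n : agree j p q -> agree j (p ^+ n) (q ^+ n).
Proof.
move=> h; elim: n => [|n IH]; first by move=> i.
by rewrite !exprS; apply: agree_mul.
Qed.

Lemma agreeTp u j N : (j <= N)%N -> agree j (Tp u j) (Tp u N).
Proof.
move=> jN i ij; rewrite !coefTp ij (leq_trans ij jN) //.
Qed.

Lemma lowTp u N : low 1 (Tp u N).
Proof. by move=> [|i] // _; rewrite coefTp. Qed.

Definition cf (m : nat) : R := ((m`!)%:R)^-1.
Definition E (u : nat -> R) (N : nat) : {poly R} := \sum_(m < N.+1) cf m *: (Tp u N) ^+ m.

Lemma coefE u N i : (E u N)`_i = \sum_(m < N.+1) (Tp u N ^+ m)`_i / (m`!)%:R.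
Proof. by rewrite /E coef_sum; apply: eq_bigr => m _; rewrite coefZ mulrC. Qed.

Lemma schurE u j N : (j <= N)%N -> schur_row u j = (E u N)`_j.
Proof.
move=> jN; rewrite coefE /schur_row /=.
rewrite (big_ord_widen N.+1 (fun n => (Tp u j ^+ n)`_j / (n`!)%:R)) //.
rewrite [RHS](bigID (fun m : 'I_N.+1 => (m < j.+1)%N)) /=.
rewrite [X in _ = _ + X]big1 ?addr0.
  apply: eq_bigr => m _; rewrite (@agree_exp j _ _ m (@agreeTp u j N jN)) //.
move=> m; rewrite -leqNgt => jm.
by rewrite (@low_exp _ m (lowTp u N)) ?mul0r.
Qed.

Lemma cfS i : cf i.+1 * i.+1%:R = cf i.
Proof.
rewrite /cf factS natrM invfM mulrAC mulVf ?mul1r //; exact: natr_neq0.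
Qed.

Lemma keyE u n : n%:R * (E u n)`_n = \sum_(1 <= k < n.+1) (k%:R * u k) * (E u n)`_(n - k).
Proof.
case: n => [|n]; first by rewrite mul0r big_geq.
set T := Tp u n.+1.
have hd : (E u n.+1)^`() = T^`() * \sum_(m < n.+1) cf m *: T ^+ m.
  rewrite /E raddf_sum big_ord_recl /= derivZ deriv_exp /= mulr0n scaler0 add0r.
  rewrite mulr_sumr; apply: eq_bigr => i _.
  rewrite derivZ deriv_exp /= -scaler_nat scalerA cfS scalerAr //.
have := coef_deriv (E u n.+1) n; rewrite hd coefM => h.
rewrite mulr_natl -h big_add1 /= big_mkord; apply: eq_bigr => j _.
rewrite coef_deriv coefTp /= (ltn_ord j) mulr_natl subSS.
congr (_ * _).
rewrite /E (big_ord_recr n.+1 (fun m : 'I_n.+2 => cf m *: T ^+ m)) /= coefD coefZ (@low_exp _ n.+1 (lowTp u n.+1)) ?mulr0 ?addr0 //.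
by rewrite ltnS leq_subr.
Qed.

Lemma key (u : nat -> R) n : n%:R * schur_row u n = \sum_(1 <= k < n.+1) (k%:R * u k) * schur_row u (n - k).
Proof.
rewrite (@schurE u n n) // keyE; apply: eq_big_nat => k _.
by rewrite (@schurE u (n - k) n) // leq_subr.
Qed.

Lemma sum_ext (G : nat -> R) a b : (a <= b)%N -> (forall k, (a < k)%N -> (k <= b)%N -> G k = 0) ->
  \sum_(1 <= k < a.+1) G k = \sum_(1 <= k < b.+1) G k.
Proof.
move=> ab hG; rewrite [RHS](@big_cat_nat _ _ _ a.+1) ?ltnS //.
rewrite [X in _ = _ + X]big_nat_cond [X in _ = _ + X]big1 ?addr0 //.
move=> k /andP[/andP[h1 h2] _]; by rewrite ltnS in h2; apply: hG.
Qed.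

Variable hbar : R.
Hypothesis hbar_neq0 : hbar != 0.
Hypothesis hbar_gen : forall m : nat, 1 - hbar * m%:R != 0.

Definition c (m : nat) : R := \prod_(1 <= l < m.+1) (1 - hbar * (l.-1)%:R)^-1.
Definition Dk (k m : nat) : R := \prod_(0 <= j < k) (1 - hbar * (m + j)%:R).
Definition Q (L m : nat) : R := \prod_(j <- iota 1 L) (1 - hbar * m%:R + hbar * j%:R).

Lemma Dk_neq0 k m : Dk k m != 0.
Proof. by rewrite /Dk prodf_seq_neq0; apply/allP => j _; exact: hbar_gen. Qed.

Lemma cD m k : c (m + k) * Dk k m = c m.
Proof.
elim: k => [|k IH]; first by rewrite addn0 /Dk big_geq // mulr1.
have cS : c (m + k).+1 = c (m + k) * (1 - hbar * (m + k)%:R)^-1 by rewrite /c big_nat_recr.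
have DS : Dk k.+1 m = Dk k m * (1 - hbar * (m + k)%:R) by rewrite /Dk big_nat_recr.
rewrite addnS cS DS mulrACA IH mulVf ?mulr1 //.
Qed.

Lemma QS L m : Q L.+1 m.+1 = (1 - hbar * m%:R) * Q L m.
Proof.
rewrite /Q /= big_cons (iotaDl 1 1 L) big_map.
congr (_ * _); first by rewrite -addn1 natrD; ring.
apply: eq_bigr => j _; rewrite -addn1 !natrD; ring.
Qed.

Lemma QD L m k : Q (L + k) (m + k) = Q L m * Dk k m.
Proof.
elim: k => [|k IH]; first by rewrite !addn0 /Dk big_geq // mulr1.
rewrite !addnS QS IH /Dk big_nat_recr //= -/(Dk k m).
by rewrite mulrC mulrA.
Qed.

Lemma BopE j G n : Bop hbar j G n = (1 - hbar * n%:R + hbar * j%:R) * G n.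
Proof.
rewrite /Bop /xhat /yhat /mulXn; case: n => [|n] /=; first by ring.
rewrite subn1 /=; ring.
Qed.

Lemma opprodE s F n : opprod [seq Bop hbar j | j <- s] F n =
  \prod_(j <- s) (1 - hbar * n%:R + hbar * j%:R) * F n.
Proof.
elim: s => [|j s IH] /=; first by rewrite big_nil mul1r.
by rewrite BopE IH big_cons mulrA.
Qed.

Lemma iterE k G n : iter k (@xhat R) G n = if (k <= n)%N then G (n - k)%N else 0.
Proof.
elim: k n => [|k IH] n /=; first by rewrite subn0.
rewrite {1}/xhat /mulXn; case: n => [|n] //=.
by rewrite subn1 /= IH ltnS subSS.
Qed.

Lemma xyE G n : xhat (yhat hbar G) n = - hbar * (n%:R * G n).
Proof.
rewrite /xhat /yhat /mulXn; case: n => [|n] /=; first by rewrite mul0r mulr0.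
by rewrite subn1.
Qed.

End Aux.
Arguments key {R}. Arguments sum_ext {R}. Arguments c {R}. Arguments Dk {R}. Arguments Q {R}.
Arguments cD {R hbar}. Arguments Dk_neq0 {R hbar}. Arguments QD {R}. Arguments opprodE {R}.
Arguments iterE {R}. Arguments xyE {R}.

Theorem mainTheorem6 (R : fieldType) (hbar : R) (t : nat -> R)
  (Rchar0 : [pchar R] =i pred0)
  (hbar_neq0 : hbar != 0)
  (hbar_gen : forall m : nat, 1 - hbar * m%:R != 0) :
  (forall n : nat, A_mm hbar t (Psi_mm hbar t) n = 0) /\
  (forall l : nat, (forall k : nat, (l < k)%N -> t k = 0) ->
     forall n : nat, Atilde_mm hbar t l (Psi_mm hbar t) n = 0).
Proof.
set s' := schur_row (fun m => t m / hbar).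
have keyh : forall n, hbar * (n%:R * s' n) = \sum_(1 <= k < n.+1) (k%:R * t k) * s' (n - k)%N.
  move=> n; rewrite /s' (key Rchar0) mulr_sumr; by apply: eq_bigr => k _; field.
have PsiE : forall m, Psi_mm hbar t m = s' m * c hbar m by [].
have termA : forall n k, (k <= n)%N ->
    \prod_(0 <= j < k) (1 - hbar * ((n - k)%N + j)%:R)^-1 * Psi_mm hbar t (n - k)%N
    = c hbar n * s' (n - k)%N.
  move=> n k kn; rewrite prodfV -/(Dk hbar k (n - k)) PsiE.
  rewrite -(cD hbar_gen (n - k) k) subnK //.
  have := Dk_neq0 hbar_gen k (n - k); move: (Dk hbar k (n-k)) => d dn. by field.
split.
  move=> n; rewrite /A_mm /fD /mulXn.
  rewrite (eq_big_nat _ _ (F2 := fun k => c hbar n * ((k%:R * t k) * s' (n - k)%N))); last first.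
    move=> k /andP[_ kn]; rewrite ltnS in kn; rewrite kn termA //; ring.
  rewrite -mulr_sumr -keyh PsiE; ring.
move=> l hl n; rewrite /Atilde_mm xyE opprodE -/(Q hbar l n).
pose G k := if (k <= n)%N then k%:R * t k * s' (n - k)%N else 0.
rewrite (eq_big_nat _ _ (F2 := fun k => Q hbar l n * c hbar n * G k)); last first.
  move=> k /andP[k1 kl]; rewrite ltnS in kl; rewrite iterE opprodE -/(Q hbar (l - k) (n - k)) /G.
  case: ifP => kn; last by rewrite !mulr0.
  rewrite PsiE -(cD hbar_gen (n - k) k) subnK //.
  have hq := QD hbar (l - k) (n - k) k; rewrite !subnK in hq => //; rewrite hq; ring.
rewrite -mulr_sumr.
have -> : \sum_(1 <= k < l.+1) G k = \sum_(1 <= k < n.+1) (k%:R * t k) * s' (n - k)%N.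
  rewrite (sum_ext G l (l + n)) ?leq_addr //; last first.
    by move=> k lk _; rewrite /G hl // mulr0 mul0r if_same.
  rewrite -(sum_ext G n (l + n)) ?leq_addl //; last first.
    by move=> k nk _; rewrite /G leqNgt nk.
  by apply: eq_big_nat => k /andP[_ kn]; rewrite /G -ltnS kn.
rewrite -keyh PsiE; ring.
Qed.
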